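(* Let $K$ be a field, let $L$ be a finite lattice, and let $R=H[L]=K[L]/I_L$. The following statements are equivalent: (1) $L$ is distributive; (2) the set of all poset ideals of $R$ forms a Koszul filtration of $R$; (3) $R$ admits a Koszul filtration in which every ideal is a poset ideal of $R$.
   Context: $K[L]$ denotes the polynomial ring over $K$ whose variables are the elements of $L$. For incomparable $a,b\in L$, the binomial $ab-(a\vee b)(a\wedge b)$ is called a basic binomial (Hibi relation); $I_L$ is the ideal of $K[L]$ generated by all basic binomials, and $H[L]=K[L]/I_L$. $H[L]$ is standard graded with $\deg(a)=1$ for each $a\in L$. A subset $J\subseteq L$ is a poset ideal of $L$ if $a\le b$ and $b\in J$ imply $a\in J$. For a poset ideal $J$ of $L$, $(\overline{J})$ denotes the ideal of $H[L]$ generated by the residue classes $\overline{a}=a+I_L$, $a\in J$; ideals of this form are called poset ideals of $H[L]$. For a standard graded $K$-algebra $R$ with maximal graded ideal $\mathfrak m$, a collection $\mathcal F$ of ideals of $R$ is a Koszul filtration if: (i) every ideal in $\mathcal F$ is generated by linear forms; (ii) $0$ and $\mathfrak m$ belong to $\mathcal F$; (iii) for every ideal $0\ne I\in\mathcal F$ there exists $J\in\mathcal F$ with $J\subset I$, $I/J$ cyclic, and $J:I\in\mathcal F$. *)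

(* Defs.v *)
From HB Require Import structures.
From mathcomp Require Import all_boot all_order all_algebra.
From mathcomp Require Import mpoly.

Set Implicit Arguments.
Unset Strict Implicit.
Unset Printing Implicit Defensive.

Import Order.TTheory GRing.Theory.
Local Open Scope ring_scope.
Local Open Scope order_scope.

Definition distributive_lattice (d : Order.disp_t) (L : latticeType d) : Prop :=
  forall x y z : L, Order.meet x (Order.join y z)
                    = Order.join (Order.meet x y) (Order.meet x z).

Section HibiRing.
Variables (K : fieldType) (d : Order.disp_t) (L : finLatticeType d).

Definition KL := {mpoly K[#|L|]}.

Definition var (a : L) : KL := 'X_(enum_rank a).

Definition ideal_gen (S : KL -> Prop) : KL -> Prop :=
  fun f => exists (m : nat) (r s : 'I_m -> KL),
      (forall i, S (s i)) /\ f = \sum_(i < m) r i * s i.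

Definition basic_binomial (f : KL) : Prop :=
  exists a b : L, ~~ (a >=< b) /\
    f = var a * var b - var (Order.join a b) * var (Order.meet a b).

Definition I_L : KL -> Prop := ideal_gen basic_binomial.

(** Ideals of H[L] = K[L]/I_L are represented by their preimages in K[L]
    (correspondence theorem): an ideal of K[L] containing I_L.
    The ideal of H[L] generated by the residue classes of a set S of
    polynomials has preimage the ideal of K[L] generated by I_L and S. *)
Definition genR (S : KL -> Prop) : KL -> Prop :=
  ideal_gen (fun f => I_L f \/ S f).

Definition same (I J : KL -> Prop) : Prop := forall f, I f <-> J f.

Definition linear_form (f : KL) : Prop :=
  exists c : L -> K, f = \sum_(a : L) c a *: var a.

Definition gen_by_linear_forms (I : KL -> Prop) : Prop :=
  exists S : KL -> Prop, (forall f, S f -> linear_form f) /\ same I (genR S).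

Definition zeroR : KL -> Prop := genR (fun _ => False).
Definition maxR : KL -> Prop := genR (fun f => exists a : L, f = var a).

Definition colon (J I : KL -> Prop) : KL -> Prop :=
  fun f => forall g, I g -> J (f * g).

Definition cyclic_quot (I J : KL -> Prop) : Prop :=
  exists g, I g /\ same I (genR (fun f => J f \/ f = g)).

Definition inF (F : (KL -> Prop) -> Prop) (I : KL -> Prop) : Prop :=
  exists C, F C /\ same C I.

Definition koszul_filtration (F : (KL -> Prop) -> Prop) : Prop :=
  [/\ (forall I, F I -> gen_by_linear_forms I),
      inF F zeroR /\ inF F maxR &
      (forall I, F I -> ~ same I zeroR ->
         exists J, F J /\ (forall f, J f -> I f) /\
                   cyclic_quot I J /\ inF F (colon J I))].

Definition poset_ideal (J : {set L}) : Prop :=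
  forall a b : L, a <= b -> b \in J -> a \in J.

Definition poset_idealR (J : {set L}) : KL -> Prop :=
  genR (fun f => exists2 a, a \in J & f = var a).

Definition all_poset_idealsR : (KL -> Prop) -> Prop :=
  fun I => exists J, poset_ideal J /\ same I (poset_idealR J).

End HibiRing.

(* Main.v *)
Require Import Defs.
From mathcomp Require Import all_boot all_order all_algebra.
From mathcomp Require Import mpoly.
From HB Require Import structures.
From mathcomp Require Import ring.

Set Implicit Arguments.
Unset Strict Implicit.
Unset Printing Implicit Defensive.

Import Order.TTheory GRing.Theory.

Local Open Scope order_scope.




Ltac latn n :=
  lazymatch n with
  | O => fail
  | S ?m =>
  lazymatch goal with
  | |- is_true (Order.le (Order.join _ _) _) =>
      rewrite leUx; apply/andP; split; latn n
  | |- is_true (Order.le _ (Order.meet _ _)) =>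
      rewrite lexI; apply/andP; split; latn n
  | |- _ =>
      first [ exact: lexx | assumption
            | apply: (le_trans (leIl _ _)); latn m
            | apply: (le_trans (leIr _ _)); latn m
            | apply: (le_trans _ (leUl _ _)); latn m
            | apply: (le_trans _ (leUr _ _)); latn m
            | match goal with H : is_true (Order.le ?a ?b) |- is_true (Order.le ?a _) =>
                apply: (le_trans H); latn m end ]
  end end.
Ltac lat := latn 6.


Section LatticeFacts.
Variables (disp : Order.disp_t) (T : latticeType disp).
Implicit Types x y z a b c : T.

Definition cancellative := forall u v w : T,
  u `&` w = v `&` w -> u `|` w = v `|` w -> u = v.

Lemma canc_modular : cancellative ->
  forall a b c, a <= c -> a `|` (b `&` c) = (a `|` b) `&` c.
Proof.
move=> canc a b c ac.
have uv : a `|` (b `&` c) <= (a `|` b) `&` c by lat.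
apply: (canc _ _ b).
- apply/le_anti/andP; split; lat.
- apply/le_anti/andP; split; lat.
Qed.

Section M3.
Hypothesis modular : forall a b c, a <= c -> a `|` (b `&` c) = (a `|` b) `&` c.
Variables x y z : T.
Let d := (x `&` y) `|` (y `&` z) `|` (z `&` x).
Let e := (x `|` y) `&` (y `|` z) `&` (z `|` x).

Lemma d_le_e : d <= e.
Proof. rewrite /d /e; lat. Qed.

Lemma xyz_le_e : x `&` (y `|` z) <= e.
Proof. rewrite /e; lat. Qed.

Lemma K1 : ((x `&` e) `|` d) `&` ((y `&` e) `|` d) = d.
Proof.
set y1 := (y `&` e) `|` d.
have dy1 : d <= y1 by rewrite /y1; lat.
have y1le : y1 <= y `|` (z `&` x) by rewrite /y1 /d; lat.
rewrite joinC meetC [y1 `&` _]meetC -modular //.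
apply: join_l.
have zxx : z `&` x <= x by lat.
apply: (@le_trans _ _ (x `&` (y `|` (z `&` x)))).
  by rewrite leI2 // leIl.
have -> : x `&` (y `|` (z `&` x)) = (z `&` x) `|` (y `&` x).
  by rewrite meetC joinC -modular.
rewrite /d; lat.
Qed.

Lemma K2 : ((x `&` e) `|` d) `|` ((y `&` e) `|` d) = e.
Proof.
have de := d_le_e.
have x1e : (x `&` e) `|` d <= e by lat.
apply/le_anti/andP; split; first by lat.
rewrite [(y `&` e) `|` d]joinC modular // [d `|` y]joinC.
rewrite modular // lexI lexx andbT.
apply: (@le_trans _ _ (y `|` (x `&` (y `|` z)))).
  rewrite modular; last by lat.
  rewrite /e; lat.
have := xyz_le_e; rewrite -/e => h.
rewrite joinC leU2 //; last by lat.
lat.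
Qed.

End M3.

Lemma canc_distr : cancellative -> distributive_lattice T.
Proof.
move=> canc x y z.
have modular := canc_modular canc.
pose d x y z := (x `&` y) `|` (y `&` z) `|` (z `&` x).
pose e x y z := (x `|` y) `&` (y `|` z) `&` (z `|` x).
have dC1 : forall x y z, d x y z = d x z y.
  by move=> a b c; apply/le_anti/andP; split; rewrite /d; lat.
have dC2 : forall x y z, d x y z = d y z x.
  by move=> a b c; apply/le_anti/andP; split; rewrite /d; lat.
have eC1 : forall x y z, e x y z = e x z y.
  by move=> a b c; apply/le_anti/andP; split; rewrite /e; lat.
have eC2 : forall x y z, e x y z = e y z x.
  by move=> a b c; apply/le_anti/andP; split; rewrite /e; lat.
set x1 := (x `&` e x y z) `|` d x y z.
set y1 := (y `&` e x y z) `|` d x y z.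
set z1 := (z `&` e x y z) `|` d x y z.
have h1 : x1 `&` z1 = d x y z.
  by rewrite /x1 /z1 dC1 eC1 (K1 modular x z y).
have h2 : y1 `&` z1 = d x y z.
  by rewrite /y1 /z1 dC2 eC2 (K1 modular y z x).
have h3 : x1 `|` z1 = e x y z.
  by rewrite /x1 /z1 dC1 eC1 (K2 modular x z y).
have h4 : y1 `|` z1 = e x y z.
  by rewrite /y1 /z1 dC2 eC2 (K2 modular y z x).
have xy : x1 = y1 by apply: (canc _ _ z1); rewrite ?h1 ?h2 ?h3 ?h4.
have dee : d x y z = e x y z.
  have k1 : x1 `&` y1 = d x y z := K1 modular x y z.
  have k2 : x1 `|` y1 = e x y z := K2 modular x y z.
  by rewrite -k1 -k2 xy meetxx joinxx.
apply/le_anti/andP; split; last by lat.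
have le1 : x `&` (y `|` z) <= x `&` d x y z.
  by rewrite dee lexI leIl (xyz_le_e x y z).
apply: (le_trans le1).
set a := (x `&` y) `|` (x `&` z).
have ax : a <= x by rewrite /a; lat.
have da : d x y z <= a `|` (y `&` z) by rewrite /d /a; lat.
apply: (@le_trans _ _ ((a `|` (y `&` z)) `&` x)).
  by rewrite meetC leI2.
rewrite -modular //.
rewrite /a; lat.
Qed.

End LatticeFacts.

Local Open Scope ring_scope.



Section Ideals.
Variables (K : fieldType) (dsp : Order.disp_t) (L : finLatticeType dsp).
Local Notation KL := (KL K L).
Local Notation var := (@var K dsp L).
Local Notation I_L := (@I_L K dsp L).
Local Notation genR := (@genR K dsp L).
Local Notation P := (@poset_idealR K dsp L).

Definition isIdeal (X : KL -> Prop) :=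
  [/\ X 0, forall f g, X f -> X g -> X (f + g) & forall r f, X f -> X (r * f)].

Lemma ideal_gen_ideal S : isIdeal (ideal_gen S).
Proof.
split.
- by exists 0%N, (fun _ => 0), (fun _ => 0); split => [[]//|]; rewrite big_ord0.
- move=> f g [m1 [r1 [s1 [hs1 ->]]]] [m2 [r2 [s2 [hs2 ->]]]].
  exists (m1 + m2)%N.
  exists (fun i => match split i with inl j => r1 j | inr j => r2 j end).
  exists (fun i => match split i with inl j => s1 j | inr j => s2 j end).
  split; first by move=> i; case: (split i).
  rewrite big_split_ord /=; congr (_ + _); apply: eq_bigr => i _.
    by have := unsplitK (inl i : 'I_m1 + 'I_m2); case: (split _) => // j [->].
  by have := unsplitK (inr i : 'I_m1 + 'I_m2); case: (split _) => // j [->].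
- move=> r f [m [r1 [s1 [hs ->]]]]; exists m, (fun i => r * r1 i), s1.
  by split => //; rewrite mulr_sumr; apply: eq_bigr => i _; rewrite mulrA.
Qed.

Lemma ideal_gen_sub (S : KL -> Prop) f : S f -> ideal_gen S f.
Proof.
by move=> Sf; exists 1%N, (fun _ => 1), (fun _ => f); split => //; rewrite big_ord1 mul1r.
Qed.

Lemma ideal_gen_min (S X : KL -> Prop) : isIdeal X -> (forall f, S f -> X f) ->
  forall f, ideal_gen S f -> X f.
Proof.
move=> [X0 XD XM] SX f [m [r [s [hs ->]]]].
by apply: (big_ind X) => // i _; apply: XM; apply: SX.
Qed.

Lemma id_sum (X : KL -> Prop) (I : Type) (r : seq I) (Pr : pred I) F :
  isIdeal X -> (forall i, Pr i -> X (F i)) -> X (\sum_(i <- r | Pr i) F i).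
Proof. by move=> [X0 XD XM] h; apply: big_ind. Qed.

Lemma idN (X : KL -> Prop) f : isIdeal X -> X f -> X (- f).
Proof. by move=> [X0 XD XM] Xf; rewrite -mulN1r; apply: XM. Qed.

Lemma idB (X : KL -> Prop) f g : isIdeal X -> X f -> X g -> X (f - g).
Proof. by move=> iX Xf Xg; case: (iX) => _ XD _; apply: XD => //; apply: idN. Qed.

Lemma idMr (X : KL -> Prop) f r : isIdeal X -> X f -> X (f * r).
Proof. by move=> [_ _ XM] Xf; rewrite mulrC; apply: XM. Qed.

Lemma idZ (X : KL -> Prop) (c : K) f : isIdeal X -> X f -> X (c *: f).
Proof. by move=> [_ _ XM] Xf; rewrite -mul_mpolyC; apply: XM. Qed.

Lemma ideal_same (X Y : KL -> Prop) : same X Y -> isIdeal Y -> isIdeal X.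
Proof.
move=> sXY [Y0 YD YM]; split; first by apply/sXY.
- by move=> f g /sXY Xf /sXY Xg; apply/sXY; apply: YD.
- by move=> r f /sXY Xf; apply/sXY; apply: YM.
Qed.

Lemma genR_ideal S : isIdeal (genR S).
Proof. exact: ideal_gen_ideal. Qed.

Lemma genR_gen (S : KL -> Prop) f : S f -> genR S f.
Proof. by move=> Sf; apply: ideal_gen_sub; right. Qed.

Lemma IL_ideal : isIdeal I_L.
Proof. exact: ideal_gen_ideal. Qed.

Lemma genR_IL S f : I_L f -> genR S f.
Proof. by move=> If; apply: ideal_gen_sub; left. Qed.

Lemma genR_min (S X : KL -> Prop) : isIdeal X -> (forall f, I_L f -> X f) ->
  (forall f, S f -> X f) -> forall f, genR S f -> X f.
Proof. by move=> iX hI hS; apply: ideal_gen_min => // f [/hI|/hS]. Qed.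

Lemma genR_mono (S S' : KL -> Prop) : (forall f, S f -> S' f) ->
  forall f, genR S f -> genR S' f.
Proof.
move=> h; apply: genR_min; [exact: genR_ideal|exact: genR_IL|].
by move=> f /h; apply: genR_gen.
Qed.

Lemma genR_ext (S S' : KL -> Prop) : (forall f, S f <-> S' f) -> same (genR S) (genR S').
Proof. by move=> h f; split; apply: genR_mono => g /h. Qed.

Lemma same_sym (X Y : KL -> Prop) : same X Y -> same Y X.
Proof. by move=> h f; split => /h. Qed.

Lemma same_trans (X Y Z : KL -> Prop) : same X Y -> same Y Z -> same X Z.
Proof. by move=> h1 h2 f; split => [/h1/h2|/h2/h1]. Qed.

Lemma ker_ideal (R : comNzRingType) (phi : {rmorphism KL -> R}) :
  isIdeal (fun f => phi f = 0).
Proof.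
split; first by rewrite rmorph0.
- by move=> f g hf hg; rewrite rmorphD hf hg addr0.
- by move=> r f hf; rewrite rmorphM hf mulr0.
Qed.

Definition B (p q : L) : KL :=
  var p * var q - var (Order.join p q) * var (Order.meet p q).

Lemma IL_B p q : I_L (B p q).
Proof.
have [pq|npq] := boolP (Order.comparable p q); last first.
  by apply: ideal_gen_sub; exists p, q; split.
case/orP: pq => [pq|qp]; rewrite /B.
- rewrite (Order.JoinTheory.join_r pq) (Order.MeetTheory.meet_l pq) mulrC subrr.
  by case: IL_ideal.
- rewrite (Order.JoinTheory.join_l qp) (Order.MeetTheory.meet_r qp) subrr.
  by case: IL_ideal.
Qed.

Lemma IL_sub_B (X : KL -> Prop) : isIdeal X -> (forall p q, X (B p q)) ->
  forall f, I_L f -> X f.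
Proof.
move=> iX hB; apply: ideal_gen_min => // f [a [b [_ ->]]]; exact: hB.
Qed.

End Ideals.




Section Evals.
Variables (K : fieldType) (dsp : Order.disp_t) (L : finLatticeType dsp).
Local Notation KL := (KL K L).
Local Notation var := (@var K dsp L).
Local Notation I_L := (@I_L K dsp L).
Local Notation genR := (@genR K dsp L).
Local Notation P := (@poset_idealR K dsp L).
Local Notation B := (@B K dsp L).

Definition ev (u t : L) : KL -> K :=
  meval (fun i : 'I_#|L| => if ((u <= enum_val i) && (enum_val i <= t))%O then (1 : K) else 0).

Lemma evB u t f g : ev u t (f - g) = ev u t f - ev u t g.
Proof. by rewrite /ev rmorphB. Qed.
Lemma evM u t f g : ev u t (f * g) = ev u t f * ev u t g.
Proof. by rewrite /ev rmorphM. Qed.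
Lemma ev_ideal u t : isIdeal (fun f => ev u t f = 0).
Proof. exact: (ker_ideal (meval _)). Qed.

Lemma ev_var u t b : ev u t (var b) = if ((u <= b) && (b <= t))%O then 1 else 0.
Proof. by rewrite /ev /var mevalXU enum_rankK. Qed.

Lemma ev_var_in u t b : (u <= b)%O -> (b <= t)%O -> ev u t (var b) = 1.
Proof. by move=> h1 h2; rewrite ev_var h1 h2. Qed.

Lemma ev_var_out u t b : ~~ ((u <= b) && (b <= t))%O -> ev u t (var b) = 0.
Proof. by move=> h; rewrite ev_var (negbTE h). Qed.

Lemma interval_conv (u t p q : L) :
  ((u <= p) && (p <= t) && ((u <= q) && (q <= t)))%O =
  ((u <= Order.join p q) && (Order.join p q <= t) &&
   ((u <= Order.meet p q) && (Order.meet p q <= t)))%O.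
Proof.
apply/idP/idP.
  move=> /andP[/andP[up pt] /andP[uq qt]].
  by rewrite (le_trans up (leUl _ _)) leUx pt qt lexI up uq (le_trans (leIl _ _) pt).
rewrite leUx lexI => /andP[/andP[_ /andP[pt qt]] /andP[/andP[up uq] _]].
by rewrite up pt uq qt.
Qed.

Lemma ev_B u t p q : ev u t (B p q) = 0.
Proof.
rewrite /B evB !evM !ev_var.
have := interval_conv u t p q.
case: ((u <= p) && (p <= t))%O; case: ((u <= q) && (q <= t))%O;
case: ((u <= Order.join p q) && (Order.join p q <= t))%O;
case: ((u <= Order.meet p q) && (Order.meet p q <= t))%O => //= _;
by rewrite ?mul1r ?mul0r ?subrr ?subr0 ?sub0r ?oppr0.
Qed.

Lemma ev_IL u t f : I_L f -> ev u t f = 0.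
Proof.
by apply: (IL_sub_B (ev_ideal u t)) => p q; exact: ev_B.
Qed.

Lemma ev_P u t (J : {set L}) f :
  (forall c, c \in J -> ~~ ((u <= c) && (c <= t))%O) -> P J f -> ev u t f = 0.
Proof.
move=> hJ; apply: (genR_min (ev_ideal u t)); first exact: ev_IL.
by move=> g [c cJ ->]; rewrite ev_var (negbTE (hJ c cJ)).
Qed.

Lemma P_var (J : {set L}) b : b \in J -> P J (var b).
Proof. by move=> bJ; apply: genR_gen; exists b. Qed.

Lemma P_IL (J : {set L}) f : I_L f -> P J f.
Proof. exact: genR_IL. Qed.

Lemma P_ideal (J : {set L}) : isIdeal (P J).
Proof. exact: genR_ideal. Qed.

Lemma var_in_P (J : {set L}) b : P J (var b) -> b \in J.
Proof.
move=> h; apply/negPn/negP => bJ.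
suff : ev b b (var b) = 0 by rewrite ev_var !lexx /= => /eqP; rewrite oner_eq0.
apply: (ev_P _ h) => c cJ.
apply/negP => /andP[h1 h2]; have cb : c = b by apply/le_anti; rewrite h1 h2.
by move: cJ; rewrite cb (negbTE bJ).
Qed.

Lemma P_mono (J J' : {set L}) : J \subset J' -> forall f, P J f -> P J' f.
Proof.
move=> /subsetP sJ; apply: genR_mono => f [c cJ ->]; exists c => //; exact: sJ.
Qed.

Lemma zeroR_var b : ~ @zeroR K dsp L (var b).
Proof.
move=> h.
have : ev b b (var b) = 0.
  by move: h; apply: (genR_min (ev_ideal b b)) => //; exact: ev_IL.
by rewrite ev_var lexx /=; apply/eqP; rewrite oner_eq0.
Qed.

Definition kappa (f : KL) : K := f@_0.

Lemma kappaM f g : kappa (f * g) = kappa f * kappa g.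
Proof. by rewrite /kappa rmorphM. Qed.

Lemma kappa_var b : kappa (var b) = 0.
Proof. by rewrite /kappa /var mcoeffX mnm1_eq0. Qed.

Lemma kappa1 : kappa 1 = 1.
Proof. by rewrite /kappa rmorph1. Qed.

Lemma kappa_ideal : isIdeal (fun f => kappa f = 0).
Proof. exact: (ker_ideal (mcoeff 0 : KL -> K)). Qed.

Lemma kappa_IL f : I_L f -> kappa f = 0.
Proof.
apply: (IL_sub_B kappa_ideal).
by move=> p q; rewrite /B /kappa rmorphB !rmorphM /= -!/(kappa _) !kappa_var !mulr0 subrr.
Qed.

Lemma kappa_P (J : {set L}) f : P J f -> kappa f = 0.
Proof.
apply: (genR_min kappa_ideal); first exact: kappa_IL.
by move=> g [c _ ->]; rewrite kappa_var.
Qed.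

Definition lam (c : L) (f : KL) : K := (mderiv (enum_rank c) f)@_0.

Lemma lamD c f g : lam c (f + g) = lam c f + lam c g.
Proof. by rewrite /lam mderivD mcoeffD. Qed.

Lemma lamM c f g : lam c (f * g) = lam c f * kappa g + kappa f * lam c g.
Proof. by rewrite /lam mderivM mcoeffD /kappa !rmorphM. Qed.

Lemma lam_var c b : lam c (var b) = (b == c)%:R.
Proof.
rewrite /lam /var mderivX mcoeffZ mcoeffX mnm1E.
case: (eqVneq (enum_rank b) (enum_rank c)) => [e|ne].
  have -> : (U_(enum_rank b) - U_(enum_rank c) = 0)%MM.
    by apply/mnmP => k; rewrite mnmBE e subnn mnm0E.
  by rewrite eqxx (enum_rank_inj e) !eqxx mulr1.
by rewrite mul0r; move: ne; rewrite (inj_eq enum_rank_inj) => /negbTE ->.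
Qed.

End Evals.




Section KFcanc.
Variables (K : fieldType) (dsp : Order.disp_t) (L : finLatticeType dsp).
Local Notation KL := (KL K L).
Local Notation var := (@var K dsp L).
Local Notation I_L := (@I_L K dsp L).
Local Notation genR := (@genR K dsp L).
Local Notation P := (@poset_idealR K dsp L).
Local Notation B := (@B K dsp L).
Local Notation kappa := (@kappa K dsp L).
Local Notation lam := (@lam K dsp L).
Local Notation ev := (@ev K dsp L).
Local Notation IL_ideal := (@IL_ideal K dsp L).
Local Notation P_ideal := (@P_ideal K dsp L).
Local Notation P_var := (@P_var K dsp L).
Local Notation IL_B := (@IL_B K dsp L).
Local Notation ev_var_in := (@ev_var_in K dsp L _ _ _).
Local Notation ev_var_out := (@ev_var_out K dsp L).

Lemma lam0 c : lam c 0 = 0.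
Proof. by rewrite /lam mderiv0 mcoeff0. Qed.

Lemma lamB c f g : lam c (f - g) = lam c f - lam c g.
Proof. by rewrite /lam mderivB mcoeffB. Qed.

Lemma kappaD f g : kappa (f + g) = kappa f + kappa g.
Proof. by rewrite /kappa mcoeffD. Qed.

Lemma cyclic_one (J J2 : {set L}) (D C : KL -> Prop) g :
  same D (P J2) -> same C (P J) -> C g -> same C (genR (fun f => D f \/ f = g)) ->
  forall c1 c2, c1 \in J -> c1 \notin J2 -> c2 \in J -> c2 \notin J2 -> c1 = c2.
Proof.
move=> sD sC Cg sCg c1 c2 c1J c1J2 c2J c2J2.
pose Y f := exists rho : K,
  [/\ kappa f = 0, lam c1 f = rho * lam c1 g & lam c2 f = rho * lam c2 g].
have iY : isIdeal Y.
  split.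
  - by exists 0; rewrite !mul0r !lam0 /kappa mcoeff0; split.
  - move=> f h [r1 [k1 l1 m1]] [r2 [k2 l2 m2]]; exists (r1 + r2).
    by rewrite kappaD k1 k2 addr0 !lamD l1 l2 m1 m2 !mulrDl; split.
  - move=> r f [r1 [k1 l1 m1]]; exists (kappa r * r1).
    by rewrite kappaM k1 mulr0 !lamM k1 l1 m1 !mulr0 !mulrA !add0r; split.
have Yvar : forall b, b != c1 -> b != c2 -> Y (var b).
  move=> b n1 n2; exists 0; rewrite kappa_var !lam_var !mul0r.
  by rewrite (negbTE n1) (negbTE n2); split.
have YIL : forall f, I_L f -> Y f.
  apply: (IL_sub_B iY) => p q; exists 0.
  rewrite !mul0r kappa_IL; last exact: IL_B.
  by rewrite /B !lamB !lamM !kappa_var !mulr0 !mul0r !addr0 subrr; split.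
have Yg : Y g.
  exists 1; rewrite !mul1r; split => //.
  by apply: (kappa_P (J := J)); apply/sC.
have Ygen : forall f, genR (fun f => D f \/ f = g) f -> Y f.
  apply: (genR_min iY YIL) => f [Df|->] //.
  move/sD: Df; apply: (genR_min iY YIL) => h [b bJ2 ->].
  by apply: Yvar; apply/negP => /eqP eb; move: bJ2; rewrite eb ?(negbTE c1J2) ?(negbTE c2J2).
have Y1 : Y (var c1) by apply: Ygen; apply/sCg; apply/sC; exact: P_var.
have Y2 : Y (var c2) by apply: Ygen; apply/sCg; apply/sC; exact: P_var.
case: (eqVneq c1 c2) => // ne; exfalso.
case: Y1 => r1 [_]; rewrite !lam_var eqxx (negbTE ne) => e1 e2.
case: Y2 => r2 [_]; rewrite !lam_var eqxx eq_sym (negbTE ne) => e3 e4.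
have : r1 * lam c2 g == 0 by rewrite -e2.
rewrite mulf_eq0 => /orP[/eqP r10|/eqP l0].
  by move: e1; rewrite r10 mul0r => /eqP; rewrite oner_eq0.
by move: e4; rewrite l0 mulr0 => /eqP; rewrite oner_eq0.
Qed.


Lemma ring_aux1 (R : comRingType) (T U V W O : R) :
  T * (U - V) * O = V * (U * W - T * O) - U * (V * W - T * O).
Proof. ring. Qed.

Lemma KF_canc (F : (KL -> Prop) -> Prop) :
  koszul_filtration F ->
  (forall I, F I -> exists J, poset_ideal J /\ same I (P J)) ->
  cancellative L.
Proof.
move=> [hlin [hz hmax] hstep] hF u v w hm hj.
case: (eqVneq u v) => // neq; exfalso.
set o := Order.meet u w in hm *.
set t := Order.join u w in hj *.
have ou : (o <= u)%O by rewrite leIl.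
have ov : (o <= v)%O by rewrite hm leIl.
have ut : (u <= t)%O by rewrite leUl.
have vt : (v <= t)%O by rewrite hj leUl.
set f := var t * (var u - var v).
have fo : I_L (f * var o).
  have -> : f * var o = var v * B u w - var u * B v w.
    by rewrite /B -/o -/t -hm -hj /f; apply: ring_aux1.
  apply: (idB IL_ideal).
    by rewrite mulrC; apply: (idMr _ IL_ideal); exact: IL_B.
  by rewrite mulrC; apply: (idMr _ IL_ideal); exact: IL_B.
have step : forall (J : {set L}) C, F C -> poset_ideal J -> same C (P J) -> o \in J ->
   (forall (J2 : {set L}) C2, (#|J2| < #|J|)%N -> F C2 -> poset_ideal J2 ->
      same C2 (P J2) -> o \in J2 -> False) -> False.
  move=> J C FC pJ sC oJ IH.
  have Co : C (var o) by apply/sC; exact: P_var.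
  have nz : ~ same C (@zeroR K dsp L).
    by move=> h; apply: (@zeroR_var K dsp L o); apply/h.
  case: (hstep C FC nz) => D [FD [DC [[g [Cg sCg]] [E [FE sE]]]]].
  case: (hF D FD) => J2 [pJ2 sD].
  case: (hF E FE) => N [pN sN].
  have J2J : J2 \subset J.
    apply/subsetP => b bJ2; apply: var_in_P; apply/sC; apply: DC; apply/sD.
    exact: P_var.
  have oJ2 : o \notin J2.
    apply/negP => oJ2; apply: (IH J2 D) => //.
    apply: proper_card; rewrite properE J2J /=.
    apply/negP => JJ2.
    have : colon D C 1.
      move=> h /sC Ph; rewrite mul1r; apply/sD; exact: (P_mono JJ2).
    move=> /sE /sN /kappa_P; rewrite kappa1 => /eqP; rewrite oner_eq0.
    done.
  have single : forall c, c \in J -> c \notin J2 -> c = o.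
    by move=> c cJ cJ2; apply: (cyclic_one sD sC Cg sCg cJ cJ2 oJ oJ2).
  have omax : forall x, x \in J -> (o <= x)%O -> x = o.
    move=> x xJ ox; apply: single xJ _; apply/negP => xJ2.
    by move: (pJ2 o x ox xJ2); rewrite (negbTE oJ2).
  have iD : isIdeal D := ideal_same sD (P_ideal J2).
  have colf : colon D C f.
    move=> h /sC; apply: (genR_min (X := fun h => D (f * h))).
    - case: iD => D0 DD DM; split.
      + by rewrite mulr0.
      + by move=> a b Da Db; rewrite mulrDr; apply: DD.
      + by move=> r a Da; rewrite mulrCA; apply: DM.
    - move=> a Ia; apply/sD; apply: P_IL; rewrite mulrC.
      by apply: idMr => //; exact: IL_ideal.
    - move=> a [c cJ ->].
      case: (boolP (c \in J2)) => cJ2.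
        apply/sD; rewrite mulrC; apply: idMr; first exact: P_ideal.
        exact: P_var.
      by rewrite (single c cJ cJ2); apply/sD; apply: P_IL.
  have Nf : P N f by apply/sN; apply/sE.
  have Nout : forall s, (o <= s)%O -> forall b, b \in N -> ~~ ((s <= b) && (b <= t))%O.
    move=> s os b bN; apply/negP => /andP[sb bt].
    have : colon D C (var b) by apply/sE; apply/sN; exact: P_var.
    move=> /(_ _ Co) /sD hb.
    have : ev o b (var b * var o) = 0.
      apply: (ev_P _ hb) => c cJ2; apply/negP => /andP[oc _].
      have cJ : c \in J by move/subsetP: J2J; apply.
      by move: cJ2; rewrite (omax c cJ oc) (negbTE oJ2).
    have ob : (o <= b)%O by apply: le_trans sb.
    rewrite evM (ev_var_in ob (lexx _)) (ev_var_in (lexx _) ob) mulr1 => /eqP.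
    by rewrite oner_eq0.
  case: (boolP (u <= v)%O) => uv.
  - have := ev_P (Nout v ov) Nf.
    rewrite /f evM evB (ev_var_in vt (lexx _)) (ev_var_in (lexx _) vt).
    rewrite (ev_var_out (u := v) (t := t) (b := u)); last first.
      apply/negP => /andP[vu _]; move: neq.
      by rewrite (le_anti (andb_true_intro (conj uv vu))) eqxx.
    by rewrite mul1r sub0r => /eqP; rewrite oppr_eq0 oner_eq0.
  - have := ev_P (Nout u ou) Nf.
    rewrite /f evM evB (ev_var_in ut (lexx _)) (ev_var_in (lexx _) ut).
    rewrite (ev_var_out (u := u) (t := t) (b := v)); last first.
      by apply/negP => /andP[uv' _]; move: uv; rewrite uv'.
    by rewrite mul1r subr0 => /eqP; rewrite oner_eq0.
suff : forall k (J : {set L}) C, (#|J| <= k)%N -> F C -> poset_ideal J ->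
    same C (P J) -> o \in J -> False.
  case: hmax => C0 [FC0 sC0].
  case: (hF C0 FC0) => J0 [pJ0 sJ0].
  move=> /(_ #|J0| J0 C0 (leqnn _) FC0 pJ0 sJ0); apply.
  apply: var_in_P; apply/sJ0; apply/sC0; apply: genR_gen; exists o.
  done.
elim=> [|k IHk] J C.
  move=> /leq_trans/(_ (leq0n 0)) hJ _ _ _ oJ.
  by move: hJ; rewrite leqn0 => /eqP/cards0_eq JE; move: oJ; rewrite JE inE.
move=> hJ FC pJ sC oJ; apply: (step J C FC pJ sC oJ) => J2 C2 lt FC2 pJ2 sC2 oJ2.
apply: (IHk J2 C2) => //.
by rewrite -ltnS (leq_trans lt hJ).
Qed.

End KFcanc.




Section LemmaX.
Variables (K : fieldType) (dsp : Order.disp_t) (L : finLatticeType dsp).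
Local Notation KL := (KL K L).
Local Notation var := (@var K dsp L).
Local Notation I_L := (@I_L K dsp L).
Local Notation genR := (@genR K dsp L).
Local Notation P := (@poset_idealR K dsp L).
Local Notation B := (@B K dsp L).
Local Notation IL_ideal := (@IL_ideal K dsp L).
Local Notation P_ideal := (@P_ideal K dsp L).
Local Notation P_var := (@P_var K dsp L).
Local Notation IL_B := (@IL_B K dsp L).
Local Notation n := #|L|.

Variable a : L.
Hypothesis hdist : distributive_lattice L.

Definition jp (p : L) : bool :=
  [forall x : L, [forall y : L, (p <= Order.join x y)%O ==> ((p <= x) || (p <= y))%O]].

Lemma jpP p x y : jp p -> (p <= Order.join x y)%O = (p <= x)%O || (p <= y)%O.
Proof.
move=> /forallP /(_ x) /forallP /(_ y) /implyP h.
apply/idP/idP => [/h //|/orP[h1|h1]].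
  exact: le_trans h1 (leUl _ _).
exact: le_trans h1 (leUr _ _).
Qed.

Lemma sep b c : (forall p, jp p -> (p <= b)%O -> (p <= c)%O) -> (b <= c)%O.
Proof.
suff H : forall k b, (#|[set y | (y <= b)%O]| <= k)%N ->
    (forall p, jp p -> (p <= b)%O -> (p <= c)%O) -> (b <= c)%O.
  by apply: H (leqnn _).
elim=> [|k IH] {}b hk hb.
  by move: hk; rewrite leqn0 => /eqP/cards0_eq/setP/(_ b); rewrite !inE lexx.
have [jb|njb] := boolP (jp b); first by apply: hb jb (lexx _).
move: njb => /forallPn [x /forallPn [y]].
rewrite negb_imply negb_or => /andP[bxy /andP[nbx nby]].
have beq : b = Order.join (Order.meet b x) (Order.meet b y).
  by rewrite -hdist; apply/esym/meet_l.
have down z : (z <= b)%O -> ~~ (b <= z)%O ->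
    (#|[set y0 | (y0 <= z)%O]| <= k)%N.
  move=> zb nbz; rewrite -ltnS (leq_trans _ hk) //; apply: proper_card.
  rewrite properE; apply/andP; split.
    by apply/subsetP => w; rewrite !inE => wz; apply: le_trans wz zb.
  by apply/subsetP => /(_ b); rewrite !inE lexx => /(_ isT); apply/negP.
rewrite beq leUx; apply/andP; split.
- apply: IH; first apply: down; first exact: leIl.
    by rewrite lexI lexx /= nbx.
  by move=> p jpp pbx; apply: hb jpp (le_trans pbx (leIl _ _)).
- apply: IH; first apply: down; first exact: leIl.
    by rewrite lexI lexx /= nby.
  by move=> p jpp pbx; apply: hb jpp (le_trans pbx (leIl _ _)).
Qed.

Definition tau1 (b : L) : 'X_{1..n} :=
  [multinom ((enum_val j == a) || (jp (enum_val j) && (enum_val j <= b)%O) : nat) | j < n].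

Definition hpsi (i : 'I_n) : KL :=
  if (a <= enum_val i)%O then 'X_[tau1 (enum_val i)] else 0.

Definition psi : KL -> KL := mmap (@mpolyC n K) hpsi.

Lemma psiM f g : psi (f * g) = psi f * psi g.
Proof. by rewrite /psi rmorphM. Qed.

Lemma psi_ideal : isIdeal (fun f => psi f = 0).
Proof. exact: (ker_ideal (mmap (@mpolyC n K) hpsi)). Qed.

Lemma psi_var b : psi (var b) = if (a <= b)%O then 'X_[tau1 b] else 0.
Proof. by rewrite /psi /var mmapX mmap1U /hpsi enum_rankK. Qed.


Lemma tau1_add p q : (tau1 p + tau1 q = tau1 (Order.join p q) + tau1 (Order.meet p q))%MM.
Proof.
apply/mnmP => j; rewrite !mnmDE !mnmE.
case: (enum_val j == a) => //=.
case jj: (jp (enum_val j)) => //=.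
rewrite (jpP _ _ jj) lexI.
by case: (enum_val j <= p)%O; case: (enum_val j <= q)%O.
Qed.

Lemma psi_B p q : psi (B p q) = 0.
Proof.
rewrite /B /psi rmorphB !rmorphM /= -!/(psi _) !psi_var lexI.
case ap: (a <= p)%O; case aq: (a <= q)%O; rewrite ?mul0r ?mulr0 ?subrr //=.
  by rewrite (le_trans ap (leUl _ _)) -!mpolyXD tau1_add subrr.
Qed.

Definition Na : {set L} := [set b | ~~ (a <= b)%O].

Lemma psi_IL f : I_L f -> psi f = 0.
Proof. by apply: (IL_sub_B psi_ideal) => p q; exact: psi_B. Qed.

Lemma psi_P f : P Na f -> psi f = 0.
Proof.
apply: (genR_min psi_ideal); first exact: psi_IL.
by move=> g [b]; rewrite inE => /negbTE nab ->; rewrite psi_var nab.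
Qed.

Definition Mon (s : seq L) : KL := \prod_(b <- s) var b.
Definition Ms (s : seq L) : 'X_{1..n} := (\sum_(b <- s) U_(enum_rank b))%MM.
Definition Ts (s : seq L) : 'X_{1..n} := (\sum_(b <- s) tau1 b)%MM.

Lemma Mon_X s : Mon s = 'X_[Ms s].
Proof.
elim: s => [|b s IH]; first by rewrite /Mon /Ms !big_nil mpolyX0.
by rewrite /Mon /Ms !big_cons mpolyXD -/(Mon s) IH.
Qed.

Lemma psi_Mon s : all (fun b => (a <= b)%O) s -> psi (Mon s) = 'X_[Ts s].
Proof.
elim: s => [|b s IH]; first by rewrite /Mon /Ts !big_nil /psi rmorph1 mpolyX0.
move=> /andP[ab hs].
by rewrite /Mon /Ts !big_cons psiM psi_var ab mpolyXD -/(Mon s) IH.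
Qed.


Definition geR : rel L := fun x y => (y <= x)%O.
Lemma geR_trans : transitive geR.
Proof. by move=> y x z /= yx zy; apply: le_trans zy yx. Qed.

Fixpoint ins (x : L) (s : seq L) : seq L :=
  match s with
  | [::] => [:: x]
  | c :: r => Order.join x c :: ins (Order.meet x c) r
  end.

Lemma ins_all_le y x s : (x <= y)%O -> all (fun z => z <= y)%O s ->
  all (fun z => z <= y)%O (ins x s).
Proof.
elim: s x => [|c s IH] x xy /=; first by rewrite xy.
move=> /andP[cy sy]; rewrite leUx xy cy /=; apply: IH => //.
exact: le_trans (leIl _ _) xy.
Qed.

Lemma ins_all_ge x s : (a <= x)%O -> all (fun z => a <= z)%O s ->
  all (fun z => a <= z)%O (ins x s).
Proof.
elim: s x => [|c s IH] x ax /=; first by rewrite ax.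
move=> /andP[ac sa]; rewrite (le_trans ax (leUl _ _)) /=; apply: IH => //.
by rewrite lexI ax ac.
Qed.

Lemma ins_sorted x s : sorted geR s -> sorted geR (ins x s).
Proof.
elim: s x => [|c s IH] x //= hs.
move: hs; rewrite !(path_sortedE geR_trans) => /andP[hc hs].
apply/andP; split; last exact: IH.
apply: ins_all_le; first by apply: le_trans (leIl _ _) (leUl _ _).
apply/allP => z zs; move/allP: hc => /(_ z zs) /= zc.
exact: le_trans zc (leUr _ _).
Qed.

Lemma ring_aux2 (R : comRingType) (X C M J Mm N : R) :
  X * (C * M) - J * N = (X * C - J * Mm) * M + J * (Mm * M - N).
Proof. ring. Qed.

Lemma ring_aux3 (R : comRingType) (X M Mc N : R) :
  X * M - N = X * (M - Mc) + (X * Mc - N).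
Proof. ring. Qed.

Lemma ins_mon x s : I_L (var x * Mon s - Mon (ins x s)).
Proof.
elim: s x => [|c s IH] x.
  rewrite /Mon /= !big_cons !big_nil subrr; by case: IL_ideal.
rewrite /Mon /= !big_cons -!/(Mon _).
rewrite (ring_aux2 _ _ _ _ (var (Order.meet x c))).
case: IL_ideal => _ ID _; apply: ID.
  by apply: (idMr _ IL_ideal); exact: IL_B.
by rewrite mulrC; apply: (idMr _ IL_ideal); apply: IH.
Qed.

Definition chain (s : seq L) : seq L := foldr ins [::] s.

Lemma chain_sorted s : sorted geR (chain s).
Proof. by elim: s => //= b s IH; apply: ins_sorted. Qed.

Lemma chain_ge s : all (fun z => a <= z)%O s -> all (fun z => a <= z)%O (chain s).
Proof.
by elim: s => //= b s IH /andP[ab hs]; apply: ins_all_ge => //; apply: IH.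
Qed.

Lemma chain_mon s : I_L (Mon s - Mon (chain s)).
Proof.
elim: s => [|b s IH]; first by rewrite subrr; case: IL_ideal.
rewrite /= {1}/Mon big_cons -/(Mon s) (ring_aux3 _ _ (Mon (chain s))).
case: IL_ideal => _ ID _; apply: ID; last exact: ins_mon.
by rewrite mulrC; apply: (idMr _ IL_ideal).
Qed.

Lemma Ts_size c : Ts c (enum_rank a) = size c.
Proof.
rewrite /Ts mnm_sumE -sum1_size; apply: eq_bigr => b _.
by rewrite mnmE enum_rankK eqxx.
Qed.

Lemma Ts_jp c p : jp p -> p != a ->
  Ts c (enum_rank p) = (\sum_(x <- c) ((p <= x)%O : nat))%N.
Proof.
move=> jpp pa; rewrite /Ts mnm_sumE; apply: eq_bigr => b _.
by rewrite mnmE enum_rankK (negbTE pa) jpp.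
Qed.

Lemma cnt_pos (c : seq L) p :
  (0 < \sum_(x <- c) ((p <= x)%O : nat))%N = has (fun x => p <= x)%O c.
Proof.
elim: c => [|x c IH]; first by rewrite big_nil.
by rewrite big_cons addn_gt0 IH /=; case: (p <= x)%O.
Qed.

Lemma has_head x s p : sorted geR (x :: s) -> has (fun y => p <= y)%O (x :: s) ->
  (p <= x)%O.
Proof.
rewrite /= (path_sortedE geR_trans) => /andP[hx _] /orP[//|/hasP[y ys py]].
by move/allP: hx => /(_ y ys) /= yx; apply: le_trans py yx.
Qed.

Lemma hle x x' s s' : sorted geR (x :: s) -> sorted geR (x' :: s') ->
  all (fun z => a <= z)%O (x' :: s') -> Ts (x :: s) = Ts (x' :: s') -> (x <= x')%O.
Proof.
move=> sx sx' ax' eT; apply: sep => p jpp px.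
case: (eqVneq p a) => [->|pa]; first by case/andP: ax'.
apply: has_head sx' _; rewrite -cnt_pos -Ts_jp // -eT Ts_jp // cnt_pos /=.
by rewrite px.
Qed.

Lemma Ts_cons b r : Ts (b :: r) = (tau1 b + Ts r)%MM.
Proof. by rewrite /Ts big_cons. Qed.

Lemma Ts_inj c c' : sorted geR c -> sorted geR c' ->
  all (fun z => a <= z)%O c -> all (fun z => a <= z)%O c' -> Ts c = Ts c' -> c = c'.
Proof.
elim: c c' => [|b r IH] [|b' r'] //.
- by move=> _ _ _ _ /mnmP/(_ (enum_rank a)); rewrite !Ts_size.
- by move=> _ _ _ _ /mnmP/(_ (enum_rank a)); rewrite !Ts_size.
move=> sc sc' ac ac' eT.
have bb : b = b'.
  by apply/le_anti/andP; split; [apply: (hle sc sc' ac' eT)|apply: (hle sc' sc ac (esym eT))].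
subst b'; congr (_ :: _); apply: IH.
- exact: path_sorted sc.
- exact: path_sorted sc'.
- by case/andP: ac.
- by case/andP: ac'.
apply/mnmP => j; move/mnmP: eT => /(_ j); rewrite !Ts_cons !mnmDE.
by move/addnI.
Qed.

Lemma Ms_count s x : Ms s (enum_rank x) = count_mem x s.
Proof.
elim: s => [|b s IH]; first by rewrite /Ms big_nil mnm0E.
by rewrite /Ms big_cons mnmDE -/(Ms s) IH mnm1E (inj_eq enum_rank_inj).
Qed.

Lemma Ms_perm s s' : Ms s = Ms s' -> perm_eq s s'.
Proof.
move=> e; apply/allP => x _ /=.
by move/mnmP: e => /(_ (enum_rank x)); rewrite !Ms_count => ->.
Qed.

Lemma Ts_perm s s' : perm_eq s s' -> Ts s = Ts s'.
Proof. by move=> h; rewrite /Ts (perm_big _ h). Qed.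

Definition sm (m : 'X_{1..n}) : seq L :=
  flatten [seq nseq (m i) (enum_val i) | i <- enum 'I_n].

Lemma X_sm m : 'X_[m] = Mon (sm m).
Proof.
rewrite mpolyXE_id /Mon /sm big_flatten /= big_map big_enum /=.
apply: eq_bigr => i _; rewrite big_nseq /var enum_valK.
by elim: (m i) => //= k <-; rewrite exprS.
Qed.


Lemma mpolyX_neq0 (m : 'X_{1..n}) : 'X_[m] != 0 :> KL.
Proof.
apply/negP => /eqP/mpolyP/(_ m); rewrite mcoeffX eqxx mcoeff0 => /eqP.
by rewrite oner_eq0.
Qed.

Lemma psiZ (c : K) f : psi (c *: f) = c *: psi f.
Proof. by rewrite /psi mmapZ /= mul_mpolyC. Qed.

Lemma psiB f g : psi (f - g) = psi f - psi g.
Proof. by rewrite /psi rmorphB. Qed.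

Lemma lemmaX f : P Na (f * var a) -> P Na f.
Proof.
move=> hf.
have psif : psi f = 0.
  have := psi_P hf; rewrite psiM psi_var lexx => /eqP; rewrite mulf_eq0.
  by rewrite (negbTE (mpolyX_neq0 _)) orbF => /eqP.
pose good m := all (fun z => (a <= z)%O) (sm m).
pose NF := \sum_(m <- msupp f | good m) f@_m *: Mon (chain (sm m)).
have iPN := P_ideal Na.
have h1 : P Na (f - NF).
  rewrite {1}(mpolyE f) /NF [X in _ - X]big_mkcond /= -sumrB.
  apply: (id_sum _ iPN) => m _.
  case gm: (good m) => /=.
  - rewrite -scalerBr; apply: (idZ _ iPN); rewrite X_sm; apply: P_IL.
    exact: chain_mon.
  - rewrite subr0; apply: (idZ _ iPN); rewrite X_sm.
    move/negbT: gm => /allPn [b bs nab].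
    rewrite /Mon (perm_big _ (perm_to_rem bs)) big_cons.
    by apply: (idMr _ iPN); apply: P_var; rewrite inE.
have h2 : psi NF = 0.
  have := psi_P h1; rewrite psiB psif sub0r.
  by move=> /eqP; rewrite oppr_eq0 => /eqP.
have psiNF : psi NF = \sum_(m <- msupp f | good m) f@_m *: 'X_[Ts (chain (sm m))].
  rewrite /NF /psi raddf_sum /=; apply: eq_bigr => m gm.
  by rewrite -/(psi _) psiZ psi_Mon //; apply: chain_ge.
have NF0 : NF = 0.
  apply/mpolyP => mu; rewrite mcoeff0.
  have -> : NF@_mu = \sum_(m <- msupp f | good m) f@_m * (Ms (chain (sm m)) == mu)%:R.
    by rewrite /NF raddf_sum; apply: eq_bigr => m _; rewrite /= mcoeffZ Mon_X mcoeffX.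
  case: (boolP (has (fun m => good m && (Ms (chain (sm m)) == mu)) (msupp f))).
  - move=> /hasP [m0 m0r /andP[g0 /eqP e0]].
    have := congr1 (mcoeff (Ts (chain (sm m0)))) h2.
    rewrite psiNF mcoeff0 raddf_sum /= => eN; rewrite -[X in _ = X]eN.
    apply: eq_bigr => m gm; rewrite mcoeffZ mcoeffX; congr (_ * (nat_of_bool _)%:R).
    apply/eqP/eqP => [e|e].
      by apply: Ts_perm; apply: Ms_perm; rewrite e e0.
    have := Ts_inj (chain_sorted _) (chain_sorted _) (chain_ge gm) (chain_ge g0) e.
    by move=> ->.
  - move=> /hasPn hn; rewrite big_seq_cond big1 // => m /andP[mr gm].
    by have := hn m mr; rewrite gm /= => /negbTE ->; rewrite mulr0.
by move: h1; rewrite NF0 subr0.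
Qed.

End LemmaX.



Section DistrKF.
Variables (K : fieldType) (dsp : Order.disp_t) (L : finLatticeType dsp).
Local Notation KL := (KL K L).
Local Notation var := (@var K dsp L).
Local Notation I_L := (@I_L K dsp L).
Local Notation genR := (@genR K dsp L).
Local Notation P := (@poset_idealR K dsp L).
Local Notation B := (@B K dsp L).
Local Notation IL_ideal := (@IL_ideal K dsp L).
Local Notation P_ideal := (@P_ideal K dsp L).
Local Notation P_var := (@P_var K dsp L).
Local Notation IL_B := (@IL_B K dsp L).

Lemma P0_zero : same (P set0) (@zeroR K dsp L).
Proof. by apply: genR_ext => f; split => [[b]|//]; rewrite inE. Qed.

Lemma PT_max : same (P setT) (@maxR K dsp L).
Proof. by apply: genR_ext => f; split => [[b _ ->]|[b ->]]; [exists b|exists b]. Qed.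

Theorem distr_KF : distributive_lattice L -> koszul_filtration (@all_poset_idealsR K dsp L).
Proof.
move=> hdist; split.
- move=> I [J [pJ sI]].
  exists (fun f => exists2 a, a \in J & f = var a); split => //.
  move=> f [b _ ->]; exists (fun c => (c == b)%:R).
  rewrite (bigD1 b) //= eqxx scale1r big1 ?addr0 // => c /negbTE ->.
  by rewrite scale0r.
- split.
  + exists (P set0); split; last exact: P0_zero.
    by exists set0; split => // x y _; rewrite inE.
  + exists (P setT); split; last exact: PT_max.
    by exists setT; split => // x y _; rewrite !inE.
move=> I [J [pJ sI]] nz.
have [x xJ] : exists x, x \in J.
  case: (set_0Vmem J) => [J0|[y yJ]]; last by exists y.
  exfalso; apply: nz.
  by apply: same_trans sI _; rewrite J0; exact: P0_zero.
case: (@arg_maxnP _ x (fun y => y \in J) (fun y => #|[set z | (z <= y)%O]|) xJ).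
move=> a aJ amax.
have amaxP : forall b, b \in J -> (a <= b)%O -> b = a.
  move=> b bJ ab; have le := amax b bJ.
  have sub : [set z | (z <= a)%O] \subset [set z | (z <= b)%O].
    by apply/subsetP => z; rewrite !inE => za; apply: le_trans za ab.
  have eqc : #|[set z | (z <= a)%O]| = #|[set z | (z <= b)%O]|.
    by apply/eqP; rewrite eqn_leq subset_leq_card.
  have := subset_cardP eqc; rewrite sub => /(_ isT)/(_ b).
  rewrite !inE lexx => ba; apply/le_anti; rewrite ab andbT; exact/idP.
set J2 := J :\ a.
have pJ2 : poset_ideal J2.
  move=> y z yz; rewrite !inE => /andP[za zJ]; rewrite (pJ y z yz zJ) andbT.
  apply/eqP => ya; move: za; rewrite (amaxP z zJ) ?eqxx //; rewrite -ya; exact: yz.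
have iI : isIdeal I := ideal_same sI (P_ideal J).
have Ia : I (var a) by apply/sI; exact: P_var.
set Na := [set b | ~~ (a <= b)%O].
have J2Na : J2 \subset Na.
  apply/subsetP => y; rewrite !inE => /andP[ya yJ]; apply/negP => ay.
  by move: ya; rewrite (amaxP y yJ ay) eqxx.
exists (P J2); split; first by exists J2.
split.
  move=> f /(P_mono (subsetDl J [set a])) /sI; done.
split.
  exists (var a); split => // f; split.
  - move/sI; apply: (genR_min (genR_ideal _)); first exact: genR_IL.
    move=> g [b bJ ->]; case: (eqVneq b a) => [->|ba].
      by apply: genR_gen; right.
    by apply: genR_gen; left; apply: P_var; rewrite !inE ba bJ.
  - apply: (genR_min iI); first by move=> g Ig; apply/sI; exact: P_IL.
    move=> g [Pg|->] //; apply/sI; move: Pg; apply: P_mono; exact: subsetDl.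
exists (P Na); split.
  exists Na; split => //.
  move=> y z yz; rewrite !inE; apply: contra => ay; exact: le_trans ay yz.
move=> f; split.
- move: f; apply: (genR_min (X := fun f => forall h, I h -> P J2 (f * h))).
  + split.
    * by move=> h _; rewrite mul0r; case: (P_ideal J2).
    * move=> f g hf hg h Ih; rewrite mulrDl; case: (P_ideal J2) => _ PD _.
      by apply: PD; [apply: hf|apply: hg].
    * move=> r f hf h Ih; rewrite -mulrA; case: (P_ideal J2) => _ _ PM.
      by apply: PM; apply: hf.
  + move=> f If h Ih; apply: P_IL.
    by apply: (idMr _ IL_ideal).
  + move=> g [b bNa ->] h /sI.
    apply: (genR_min (X := fun h => P J2 (var b * h))).
    * split.
      -- by rewrite mulr0; case: (P_ideal J2).
      -- move=> f1 f2 hf hg; rewrite mulrDr; case: (P_ideal J2) => _ PD _.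
         by apply: PD.
      -- move=> r f hf; rewrite mulrCA; case: (P_ideal J2) => _ _ PM.
         by apply: PM.
    * move=> f If; apply: P_IL; rewrite mulrC.
      by apply: (idMr _ IL_ideal).
    * move=> g' [c cJ ->].
      case: (eqVneq c a) => [->|ca]; last first.
        rewrite mulrC; apply: (idMr _ (P_ideal J2)); apply: P_var.
        by rewrite !inE ca cJ.
      have -> : var b * var a = B b a + var (Order.join b a) * var (Order.meet b a).
        by rewrite /B subrK.
      case: (P_ideal J2) => _ PD _; apply: PD; first by apply: P_IL; exact: IL_B.
      rewrite mulrC; apply: (idMr _ (P_ideal J2)); apply: P_var.
      rewrite !inE (pJ _ a (leIr _ _) aJ) andbT.
      apply/eqP => e; move: bNa; rewrite inE; apply/negP/negPn.
      by rewrite -e leIl.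
- move=> hc; apply: (lemmaX hdist).
  by move: (hc _ Ia); apply: P_mono.
Qed.

End DistrKF.


Close Scope ring_scope.
Close Scope order_scope.

Theorem theorem2p1 (K : fieldType) (d : Order.disp_t) (L : finLatticeType d) :
  (distributive_lattice L <-> koszul_filtration (@all_poset_idealsR K d L)) /\
  (koszul_filtration (@all_poset_idealsR K d L) <->
     exists F : (KL K L -> Prop) -> Prop,
       koszul_filtration F /\
       (forall I, F I -> exists J, poset_ideal J /\ same I (@poset_idealR K d L J))).
Proof.
have KF3_1 : (exists F : (KL K L -> Prop) -> Prop, koszul_filtration F /\
       (forall I, F I -> exists J, poset_ideal J /\ same I (@poset_idealR K d L J))) ->
    distributive_lattice L.
  by move=> [F [kf hF]]; apply: canc_distr; exact: (KF_canc kf hF).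
split; split.
- exact: distr_KF.
- move=> kf; apply: KF3_1; exists (@all_poset_idealsR K d L); split => //.
- move=> kf; exists (@all_poset_idealsR K d L); split => //.
- by move=> h3; apply: distr_KF; apply: KF3_1.
Qed.
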